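(* There exist two players with the same (general, non-additive) valuation $v$ over a finite set of goods such that no allocation is both EFX and Pareto optimal. Here $v$ is allowed to have zero marginal utility, i.e. $v(S\cup\{g\})=v(S)$ for some $S$ and $g\notin S$.
   Context: A valuation is a function $v:2^M\to\mathbb{R}_{\ge0}$ with $v(\emptyset)=0$ that is monotone: $v(S)\le v(T)$ whenever $S\subseteq T$. An allocation is an ordered partition $(A_1,\dots,A_n)$ of $M$; parts may be empty. It is EFX if for all players $i,j$ and every $g\in A_j$ we have $v_i(A_i)\ge v_i(A_j\setminus\{g\})$. It is Pareto optimal (PO) if there is no allocation $B$ with $v_i(B_i)\ge v_i(A_i)$ for all $i$ and $v_j(B_j)>v_j(A_j)$ for some $j$. *)

(* Defs.v *)
From mathcomp Require Import all_boot.
From Stdlib Require Import Reals.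
Set Implicit Arguments. Unset Strict Implicit. Unset Printing Implicit Defensive.

Definition valuation (M : finType) (v : {set M} -> R) : Prop :=
  v set0 = 0%R /\ (forall S, Rle 0 (v S)) /\
  (forall S T : {set M}, S \subset T -> Rle (v S) (v T)).

Definition is_allocation (n : nat) (M : finType) (A : 'I_n -> {set M}) : Prop :=
  (forall i j : 'I_n, i != j -> [disjoint A i & A j]) /\
  (\bigcup_(i < n) A i = [set: M]).

Definition EFX (n : nat) (M : finType) (vs : 'I_n -> {set M} -> R)
  (A : 'I_n -> {set M}) : Prop :=
  forall (i j : 'I_n) (g : M), g \in A j -> Rle (vs i (A j :\ g)) (vs i (A i)).

Definition pareto_optimal (n : nat) (M : finType) (vs : 'I_n -> {set M} -> R)
  (A : 'I_n -> {set M}) : Prop :=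
  ~ (exists B : 'I_n -> {set M}, is_allocation B /\
       (forall i, Rle (vs i (A i)) (vs i (B i))) /\
       (exists j, Rlt (vs j (A j)) (vs j (B j)))).

(* Main.v *)
Require Import Defs.
From mathcomp Require Import all_boot.
From Stdlib Require Import Reals.
From Stdlib Require Import Lra.

Set Implicit Arguments. Unset Strict Implicit.

Definition ga : 'I_2 := ord0.
Definition gb : 'I_2 := ord_max.

Definition vv (S : {set 'I_2}) : R :=
  if ga \in S then (if gb \in S then 2%R else 1%R) else 0%R.

Lemma vv_val : valuation vv.
Proof.
split; first by rewrite /vv in_set0.
split; first by move=> S; rewrite /vv; case: ifP => _; [case: ifP => _|]; lra.
move=> S T /subsetP ST; rewrite /vv.
have hA := ST ga; have hB := ST gb.
case aS: (ga \in S); case bS: (gb \in S); case aT: (ga \in T); case bT: (gb \in T);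
  rewrite ?aS ?bS ?aT ?bT in hA hB |- *; try lra.
all: try by move: (hA isT).
all: by move: (hB isT).
Qed.

Lemma alloc_const (i0 : 'I_2) :
  is_allocation (fun i : 'I_2 => if i == i0 then [set: 'I_2] else set0).
Proof.
split.
  move=> i j ij; case: (eqVneq i i0) => [ei|ni].
    subst i => /=; rewrite eq_sym (negbTE ij); by rewrite -setI_eq0 setI0.
  by rewrite -setI_eq0 set0I.
apply/setP => x; rewrite in_setT; apply/bigcupP; exists i0 => //.
by rewrite eqxx in_setT.
Qed.

Lemma alloc_mem (A : 'I_2 -> {set 'I_2}) x :
  is_allocation A -> (x \in A ord0) = (x \notin A ord_max).
Proof.
move=> [D U].
have : x \in \bigcup_(i < 2) A i by rewrite U in_setT.
have d := D ord0 ord_max isT.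
case/bigcupP => i _ xi.
case: (x \in A ord0) /idP => h.
  apply/esym/negP => h'; move: d; rewrite -setI_eq0 => /eqP/setP/(_ x).
  by rewrite inE h h' in_set0.
have [ei|ei] : i = ord0 \/ i = ord_max.
  by case: i xi => [[|[|k]] p] _ //; [left|right]; exact/val_inj.
  by subst i; case: h.
by subst i; rewrite xi.
Qed.

Theorem theorem5p2 :
  exists (m : nat) (v : {set 'I_m} -> R),
    valuation v /\
    (exists (S : {set 'I_m}) (g : 'I_m), g \notin S /\ v (g |: S) = v S) /\
    (forall A : 'I_2 -> {set 'I_m},
        is_allocation A ->
        ~ (EFX (fun _ : 'I_2 => v) A /\ pareto_optimal (fun _ : 'I_2 => v) A)).
Proof.
exists 2, vv; split; first exact: vv_val.
split.
  exists set0, gb; split; first by rewrite in_set0.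
  by rewrite /vv setU0 in_set0 in_set1.
move=> A HA [E P].
have ma := alloc_mem ga HA; have mb := alloc_mem gb HA.
case a0: (ga \in A ord0); case b0: (gb \in A ord0); move: ma mb;
  rewrite a0 b0 => ma mb.
- have := E ord_max ord0 gb b0.
  rewrite /vv !in_setD1 a0 /= -(negbK (ga \in A ord_max)) -ma.
  rewrite -(negbK (gb \in A ord_max)) -mb /=; lra.
- apply: P; exists (fun i : 'I_2 => if i == ord0 then [set: 'I_2] else set0).
  split; first exact: alloc_const.
  split.
    move=> i; case: (eqVneq i ord0) => [->|ni]; rewrite /vv ?in_setT ?in_set0.
      rewrite a0 b0; lra.
    have -> : i = ord_max by apply/val_inj; case: i ni => [[|[|k]] p] //=.
    rewrite -(negbK (ga \in A ord_max)) -ma -(negbK (gb \in A ord_max)) -mb /=.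
    lra.
  exists ord0; rewrite /vv a0 b0 !in_setT; lra.
- apply: P; exists (fun i : 'I_2 => if i == ord_max then [set: 'I_2] else set0).
  split; first exact: alloc_const.
  split.
    move=> i; case: (eqVneq i ord_max) => [->|ni]; rewrite /vv ?in_setT ?in_set0.
      rewrite -(negbK (ga \in A ord_max)) -ma -(negbK (gb \in A ord_max)) -mb /=.
      lra.
    have -> : i = ord0 by apply/val_inj; case: i ni => [[|[|k]] p] //=.
    rewrite a0; lra.
  exists ord_max; rewrite /vv !in_setT.
  rewrite -(negbK (ga \in A ord_max)) -ma -(negbK (gb \in A ord_max)) -mb /=.
  lra.
- have hb : gb \in A ord_max by rewrite -(negbK (gb \in A ord_max)) -mb.
  have := E ord0 ord_max gb hb.
  rewrite /vv !in_setD1 a0 /= -(negbK (ga \in A ord_max)) -ma /=; lra.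
Qed.
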